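(* Let $f\colon X\to Y$ be a perfect surjective map between regular spaces $X$ and $Y$. If $X$ is very I-favorable, then $Y$ is very I-favorable.
   Context: For a family $\mathcal P$ of open subsets of $X$ contained in a family $\mathcal Q$ of open subsets of $X$, write $\mathcal P\subset_!\mathcal Q$ if for every subfamily $\mathcal S\subset\mathcal P$ and every point $x\notin\operatorname{cl}_X\bigcup\mathcal S$ there exists $W\in\mathcal P$ with $x\in W$ and $W\cap\bigcup\mathcal S=\emptyset$. $[\mathcal Q]^{\le\omega}$ denotes the set of countable subfamilies of $\mathcal Q$. A family $\mathcal C\subset[\mathcal Q]^{\le\omega}$ is a club if (i) for every increasing sequence $C_1\subset C_2\subset\cdots$ in $\mathcal C$, $\bigcup_nC_n\in\mathcal C$, and (ii) every $B\in[\mathcal Q]^{\le\omega}$ is contained in some $C\in\mathcal C$. A space $X$ with topology $\mathcal T_X$ is very I-favorable if $\{\mathcal P\in[\mathcal T_X]^{\le\omega}:\mathcal P\subset_!\mathcal T_X\}$ contains a club. A perfect map is a continuous closed map whose fibers are compact. *)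

(* Defs.v *)
From Stdlib Require Import List.

Set Implicit Arguments.

Definition family (X : Type) := (X -> Prop) -> Prop.

Definition is_topology (X : Type) (T : family X) : Prop :=
  T (fun _ => True) /\
  (forall F : family X, (forall U, F U -> T U) ->
     T (fun x => exists U, F U /\ U x)) /\
  (forall U V, T U -> T V -> T (fun x => U x /\ V x)).

Definition is_closed (X : Type) (T : family X) (F : X -> Prop) : Prop :=
  T (fun x => ~ F x).

Definition cl (X : Type) (T : family X) (A : X -> Prop) (x : X) : Prop :=
  forall U, T U -> U x -> exists y, U y /\ A y.

Definition bigU (X : Type) (S : family X) (x : X) : Prop :=
  exists U, S U /\ U x.

Definition subfam (X : Type) (P Q : family X) : Prop := forall U, P U -> Q U.

Definition T1_space (X : Type) (T : family X) : Prop :=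
  forall x y : X, x <> y -> exists U, T U /\ U x /\ ~ U y.

Definition regular_space (X : Type) (T : family X) : Prop :=
  is_topology T /\ T1_space T /\
  forall (F : X -> Prop) (x : X), is_closed T F -> ~ F x ->
    exists U V, T U /\ T V /\ U x /\ (forall y, F y -> V y) /\
      (forall y, U y -> V y -> False).

Definition continuous (X Y : Type) (TX : family X) (TY : family Y) (f : X -> Y) : Prop :=
  forall V, TY V -> TX (fun x => V (f x)).

Definition image (X Y : Type) (f : X -> Y) (A : X -> Prop) (y : Y) : Prop :=
  exists x, A x /\ f x = y.

Definition closed_map (X Y : Type) (TX : family X) (TY : family Y) (f : X -> Y) : Prop :=
  forall F, is_closed TX F -> is_closed TY (image f F).

Definition compact (X : Type) (T : family X) (K : X -> Prop) : Prop :=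
  forall C : family X, (forall U, C U -> T U) -> (forall x, K x -> bigU C x) ->
    exists l : list (X -> Prop), (forall U, In U l -> C U) /\
      (forall x, K x -> exists U, In U l /\ U x).

Definition perfect_map (X Y : Type) (TX : family X) (TY : family Y) (f : X -> Y) : Prop :=
  continuous TX TY f /\ closed_map TX TY f /\
  forall y : Y, compact TX (fun x => f x = y).

(* countable (possibly finite or empty) family *)
Definition countable_fam (X : Type) (P : family X) : Prop :=
  exists g : nat -> (X -> Prop), forall U, P U -> exists n, g n = U.

Definition ctbl_sub (X : Type) (Q P : family X) : Prop :=
  subfam P Q /\ countable_fam P.

Definition sub_bang (X : Type) (T : family X) (P Q : family X) : Prop :=
  subfam P Q /\
  forall (S : family X) (x : X), subfam S P -> ~ cl T (bigU S) x ->
    exists W, P W /\ W x /\ (forall y, W y -> bigU S y -> False).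

Definition club (X : Type) (Q : family X) (C : family X -> Prop) : Prop :=
  (forall P, C P -> ctbl_sub Q P) /\
  (forall Cs : nat -> family X, (forall n, C (Cs n)) ->
     (forall n, subfam (Cs n) (Cs (S n))) ->
     C (fun U => exists n, Cs n U)) /\
  (forall B, ctbl_sub Q B -> exists P, C P /\ subfam B P).

Definition very_I_favorable (X : Type) (T : family X) : Prop :=
  exists C : family X -> Prop, club T C /\
    forall P, C P -> ctbl_sub T P /\ sub_bang T P T.

(* Main.v *)
Require Import Defs.
From Stdlib Require Import List Classical ClassicalEpsilon Cantor PeanoNat Lia.
Import ListNotations.

Fixpoint dec (F n : nat) : list nat :=
  match F with 0 => [] | S F' =>
    match n with 0 => [] | S m => let (a, b) := of_nat m in a :: dec F' b end end.
Fixpoint enc (l : list nat) : nat :=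
  match l with [] => 0 | a :: l' => S (to_nat (a, enc l')) end.
Lemma dec_enc : forall l F, enc l < F -> dec F (enc l) = l.
Proof.
  induction l as [|a l IH]; intros [|F] H; cbn -[to_nat of_nat] in *; try lia; auto.
  rewrite cancel_of_to. f_equal. apply IH.
  pose proof (to_nat_non_decreasing a (enc l)). lia.
Qed.
Definition decl (n : nat) := dec (S n) n.
Lemma decl_enc l : decl (enc l) = l.
Proof. apply dec_enc. lia. Qed.

Lemma choice_fun (A B : Type) (R : A -> B -> Prop) :
  (forall a, exists b, R a b) -> exists h : A -> B, forall a, R a (h a).
Proof.
  intro H. exists (fun a => proj1_sig (constructive_indefinite_description _ (H a))).
  intro a. exact (proj2_sig (constructive_indefinite_description _ (H a))).
Qed.

Lemma ctbl_seq (X : Type) (Ps : nat -> family X) :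
  (forall n, countable_fam (Ps n)) -> countable_fam (fun U => exists n, Ps n U).
Proof.
  intro H. destruct (choice_fun _ _ _ H) as [gs Hgs].
  exists (fun m => let (a, b) := of_nat m in gs a b).
  intros U [n Hn]. destruct (Hgs n U Hn) as [k Hk].
  exists (to_nat (n, k)). rewrite cancel_of_to. exact Hk.
Qed.

Lemma ctbl_union (X : Type) (P1 P2 : family X) :
  countable_fam P1 -> countable_fam P2 -> countable_fam (fun U => P1 U \/ P2 U).
Proof.
  intros [g1 H1] [g2 H2].
  exists (fun m => let (a, b) := of_nat m in match a with 0 => g1 b | _ => g2 b end).
  intros U [HU|HU].
  - destruct (H1 U HU) as [k Hk]. exists (to_nat (0, k)). rewrite cancel_of_to. exact Hk.
  - destruct (H2 U HU) as [k Hk]. exists (to_nat (1, k)). rewrite cancel_of_to. exact Hk.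
Qed.

Lemma ctbl_single (X : Type) (V : X -> Prop) : countable_fam (fun U => U = V).
Proof. exists (fun _ => V). intros U ->. exists 0. reflexivity. Qed.

Lemma ctbl_empty (X : Type) : countable_fam (fun U : X -> Prop => False).
Proof. exists (fun _ _ => False). intros U []. Qed.

Lemma ctbl_lists (X Y : Type) (P : family X) (H : list (X -> Prop) -> family Y) :
  countable_fam P -> (forall s, countable_fam (H s)) ->
  countable_fam (fun W => exists s, (forall U, In U s -> P U) /\ H s W).
Proof.
  intros [g Hg] HH. destruct (choice_fun _ _ _ HH) as [gs Hgs].
  exists (fun m => let (a, b) := of_nat m in gs (map g (decl a)) b).
  intros W [s [Hs HW]].
  assert (E : exists ns, map g ns = s).
  { clear HW. induction s as [|U s IH].
    - exists []. reflexivity.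
    - destruct IH as [ns Hns]. { intros V HV. apply Hs. right. exact HV. }
      destruct (Hg U (Hs U (or_introl eq_refl))) as [k Hk].
      exists (k :: ns). simpl. rewrite Hk, Hns. reflexivity. }
  destruct E as [ns Hns]. destruct (Hgs s W HW) as [k Hk].
  exists (to_nat (enc ns, k)). rewrite cancel_of_to, decl_enc, Hns. exact Hk.
Qed.

Set Implicit Arguments.

Definition preim (X Y : Type) (f : X -> Y) (U : Y -> Prop) : X -> Prop := fun x => U (f x).
Definition sharp (X Y : Type) (f : X -> Y) (W : X -> Prop) : Y -> Prop :=
  fun y => ~ image f (fun x => ~ W x) y.
Definition lunion (X : Type) (l : list (X -> Prop)) : X -> Prop :=
  fun x => exists V, In V l /\ V x.
Definition Phi (X Y : Type) (f : X -> Y) (Q : family X) : family Y :=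
  fun W => exists l, (forall V, In V l -> Q V) /\ W = sharp f (lunion l).

Definition gsel (X : Type) (TX : family X) (C : family X -> Prop) (B : family X) : family X :=
  epsilon (inhabits (fun _ => False)) (fun P => C P /\ (ctbl_sub TX B -> subfam B P)).

Lemma gsel_spec (X : Type) (TX : family X) (C : family X -> Prop) (B : family X) :
  club TX C -> C (gsel TX C B) /\ (ctbl_sub TX B -> subfam B (gsel TX C B)).
Proof.
  intros [C1 [C2 C3]]. unfold gsel. apply epsilon_spec.
  destruct (classic (ctbl_sub TX B)) as [HB|HB].
  - destruct (C3 B HB) as [P [HP HBP]]. exists P. tauto.
  - assert (He : ctbl_sub TX (fun _ => False)).
    { split. intros U []. apply ctbl_empty. }
    destruct (C3 _ He) as [P [HP _]]. exists P. tauto.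
Qed.

Fixpoint Xs (X Y : Type) (TX : family X) (C : family X -> Prop) (f : X -> Y)
  (s : list (Y -> Prop)) : family X :=
  match s with
  | [] => gsel TX C (fun _ => False)
  | U :: s' => gsel TX C (fun V => Xs TX C f s' V \/ V = preim f U)
  end.

Lemma Xs_C X Y TX C (f : X -> Y) s : club TX C -> C (Xs TX C f s).
Proof. intro H. destruct s; simpl; apply (gsel_spec _ H). Qed.

Lemma Xs_step X Y TX TY C (f : X -> Y) U s : club TX C -> continuous TX TY f -> TY U ->
  subfam (Xs TX C f s) (Xs TX C f (U :: s)) /\ Xs TX C f (U :: s) (preim f U).
Proof.
  intros HC Hf HU. simpl.
  assert (Hc : ctbl_sub TX (fun V => Xs TX C f s V \/ V = preim f U)).
  { destruct (proj1 HC _ (Xs_C f s HC)) as [Hs1 Hs2].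
    split.
    - intros V [HV| ->]. apply Hs1, HV. apply Hf, HU.
    - apply ctbl_union. exact Hs2. apply ctbl_single. }
  pose proof (proj2 (gsel_spec _ HC) Hc) as H.
  split. intros V HV. apply H. left. exact HV. apply H. right. reflexivity.
Qed.

From Stdlib Require Import FunctionalExtensionality PropExtensionality.

Lemma Phi_open X Y (TX : family X) (TY : family Y) f Q :
  is_topology TX -> closed_map TX TY f -> subfam Q TX -> subfam (Phi f Q) TY.
Proof.
  intros [_ [Tu _]] Hcl HQ W [l [Hl ->]].
  assert (Ho : TX (lunion l)).
  { apply (Tu (fun U => In U l)). intros U HU. apply HQ, Hl, HU. }
  assert (E : (fun x => ~ ~ lunion l x) = lunion l).
  { apply functional_extensionality. intro x. apply propositional_extensionality. tauto. }
  apply (Hcl (fun x => ~ lunion l x)). unfold is_closed. rewrite E. exact Ho.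
Qed.

Lemma Phi_ctbl X Y (f : X -> Y) Q : countable_fam Q -> countable_fam (Phi f Q).
Proof.
  intro H.
  assert (H2 := ctbl_lists _ _ Q (fun l W => W = sharp f (lunion l)) H
                 (fun s => ctbl_single _ (sharp f (lunion s)))).
  destruct H2 as [g Hg]. exists g. intros U HU. apply Hg. exact HU.
Qed.

Definition Closed X Y TX C (f : X -> Y) (P : family Y) : Prop :=
  forall s, (forall U, In U s -> P U) -> forall W, Phi f (Xs TX C f s) W -> P W.

Lemma chain_mono (A : Type) (Cs : nat -> family A) :
  (forall n, subfam (Cs n) (Cs (S n))) -> forall n m, n <= m -> subfam (Cs n) (Cs m).
Proof.
  intros H n m Hnm. induction Hnm. intros U HU; exact HU.
  intros U HU. apply H, IHHnm, HU.
Qed.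

Lemma list_in_chain (A : Type) (Cs : nat -> family A) (l : list (A -> Prop)) :
  (forall n, subfam (Cs n) (Cs (S n))) ->
  (forall U, In U l -> exists n, Cs n U) -> exists N, forall U, In U l -> Cs N U.
Proof.
  intros H. induction l as [|V l IH]; intro Hl.
  - exists 0. intros U [].
  - destruct IH as [N HN]. { intros U HU. apply Hl. right. exact HU. }
    destruct (Hl V (or_introl eq_refl)) as [k Hk].
    exists (max N k). intros U [<-|HU].
    + apply (@chain_mono _ Cs H k). lia. exact Hk.
    + apply (@chain_mono _ Cs H N). lia. apply HN, HU.
Qed.

Lemma Xs_sub X Y TX C (f : X -> Y) s : club TX C -> ctbl_sub TX (Xs TX C f s).
Proof. intro HC. apply (proj1 HC), Xs_C, HC. Qed.

Fixpoint Pn X Y TX C (f : X -> Y) (B : family Y) (n : nat) : family Y :=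
  match n with
  | 0 => B
  | S n' => fun W => Pn TX C f B n' W \/
      exists s, (forall U, In U s -> Pn TX C f B n' U) /\ Phi f (Xs TX C f s) W
  end.

Lemma CY_club X Y (TX : family X) (TY : family Y) C (f : X -> Y) :
  club TX C -> is_topology TX -> closed_map TX TY f ->
  club TY (fun P => ctbl_sub TY P /\ Closed TX C f P).
Proof.
  intros HC Htop Hcl. split; [|split].
  - intros P [HP _]. exact HP.
  - intros Cs HCs Hch. split; [split|].
    + intros U [n Hn]. apply (proj1 (proj1 (HCs n))), Hn.
    + apply ctbl_seq. intro n. apply (proj2 (proj1 (HCs n))).
    + intros s Hs W HW.
      destruct (list_in_chain Cs s Hch Hs) as [N HN].
      exists N. apply (proj2 (HCs N) s HN W HW).
  - intros B HB.
    assert (Hn : forall n, ctbl_sub TY (Pn TX C f B n)).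
    { induction n as [|n IH]; simpl. exact HB. split.
      - intros W [HW|[s [_ HW]]]. apply (proj1 IH), HW.
        apply (Phi_open Htop Hcl (proj1 (Xs_sub f s HC))), HW.
      - apply ctbl_union. apply (proj2 IH).
        apply (ctbl_lists _ _ _ (fun s => Phi f (Xs TX C f s)) (proj2 IH)).
        intro s. apply Phi_ctbl, (proj2 (Xs_sub f s HC)). }
    assert (Hch : forall n, subfam (Pn TX C f B n) (Pn TX C f B (S n))).
    { intros n U HU. simpl. left. exact HU. }
    exists (fun W => exists n, Pn TX C f B n W). split; [split; [split|]|].
    + intros U [n HU]. apply (proj1 (Hn n)), HU.
    + apply ctbl_seq. intro n. apply (proj2 (Hn n)).
    + intros s Hs W HW.
      destruct (list_in_chain (Pn TX C f B) s Hch Hs) as [N HN].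
      exists (S N). simpl. right. exists s. split; assumption.
    + intros U HU. exists 0. exact HU.
Qed.

Fixpoint seqs (A : Type) (e : nat -> A) (n : nat) : list A :=
  match n with 0 => [] | S n' => e n' :: seqs e n' end.

Lemma CY_good X Y (TX : family X) (TY : family Y) C (f : X -> Y) :
  club TX C -> (forall Q, C Q -> sub_bang TX Q TX) -> continuous TX TY f ->
  (forall y, compact TX (fun x => f x = y)) -> (forall y, exists x, f x = y) ->
  forall P, ctbl_sub TY P -> Closed TX C f P -> sub_bang TY P TY.
Proof.
  intros HC Hgood Hf Hcomp Hsurj P [HPT HPc] HPcl. split. exact HPT.
  intros Sf y HS Hncl.
  assert (HU0 : P (sharp f (lunion []))).
  { apply (HPcl []). intros U []. exists []. split. intros V []. reflexivity. }
  destruct HPc as [g Hg].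
  set (e := fun n => if excluded_middle_informative (P (g n)) then g n
                     else sharp f (lunion [])).
  assert (He : forall n, P (e n)).
  { intro n. unfold e. destruct (excluded_middle_informative (P (g n))); auto. }
  assert (Hsur : forall U, P U -> exists n, e n = U).
  { intros U HU. destruct (Hg U HU) as [n Hn]. exists n. unfold e.
    destruct (excluded_middle_informative (P (g n))) as [_|Hn']. exact Hn.
    exfalso. apply Hn'. rewrite Hn. exact HU. }
  assert (Hch : forall n, subfam (Xs TX C f (seqs e n)) (Xs TX C f (seqs e (S n)))).
  { intro n. simpl. apply (proj1 (Xs_step (e n) (seqs e n) HC Hf (HPT _ (He n)))). }
  set (Q := fun V => exists n, Xs TX C f (seqs e n) V).
  assert (HQC : C Q).
  { apply (proj1 (proj2 HC)). intro n. apply Xs_C, HC. exact Hch. }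
  destruct (Hgood Q HQC) as [_ Hsb].
  assert (HQT : subfam Q TX) by apply (proj1 (proj1 HC Q HQC)).
  assert (Hseq_in : forall n U, In U (seqs e n) -> P U).
  { induction n as [|n IH]; simpl. intros U []. intros U [<-|HU]. apply He. apply IH, HU. }
  assert (Hpre : forall U, P U -> Q (preim f U)).
  { intros U HU. destruct (Hsur U HU) as [n <-]. exists (S n). simpl.
    apply (proj2 (Xs_step (e n) (seqs e n) HC Hf (HPT _ (He n)))). }
  assert (HU : exists U, TY U /\ U y /\ forall z, U z -> bigU Sf z -> False).
  { apply NNPP. intro Hno. apply Hncl. intros U HU HUy. apply NNPP; intro Hn2.
    apply Hno. exists U. split; [exact HU|split; [exact HUy|]].
    intros z Hz Hb. apply Hn2. exists z. split; assumption. }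
  destruct HU as [U1 [HU1 [HU1y HU1d]]].
  set (S' := fun V => exists U, Sf U /\ V = preim f U).
  assert (Hx : forall x, f x = y ->
     exists W, Q W /\ W x /\ (forall z, W z -> bigU S' z -> False)).
  { intros x Hfx. apply (Hsb S' x).
    - intros V [U [HSU ->]]. apply Hpre, HS, HSU.
    - intro Hc. destruct (Hc (preim f U1) (Hf _ HU1)) as [z [Hz [V [[U2 [HS2 ->]] HV]]]].
      + unfold preim. rewrite Hfx. exact HU1y.
      + apply (HU1d (f z) Hz). exists U2. split; assumption. }
  destruct (Hcomp y (fun W => Q W /\ (forall z, W z -> bigU S' z -> False)))
    as [l [Hl Hcov]].
  { intros W [HW _]. apply HQT, HW. }
  { intros x Hfx. destruct (Hx x Hfx) as [W [HW1 [HW2 HW3]]]. exists W.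
    split. split; assumption. exact HW2. }
  destruct (list_in_chain (fun n => Xs TX C f (seqs e n)) l Hch
             (fun U HU => proj1 (Hl U HU))) as [N HN].
  exists (sharp f (lunion l)). split; [|split].
  - apply (HPcl (seqs e N) (Hseq_in N)). exists l. split. exact HN. reflexivity.
  - intros [x [Hnx Hfx]]. apply Hnx. destruct (Hcov x Hfx) as [V [HV Vx]].
    exists V. split; assumption.
  - intros z Hz [U [HSU HUz]]. destruct (Hsurj z) as [x Hfx].
    destruct (classic (lunion l x)) as [[V [HV Vx]]|Hnl].
    + apply (proj2 (Hl V HV) x Vx). exists (preim f U). split.
      exists U. split. exact HSU. reflexivity. unfold preim. rewrite Hfx. exact HUz.
    + apply Hz. exists x. split; assumption.
Qed.

Theorem theorem3p4 (X Y : Type) (TX : family X) (TY : family Y) (f : X -> Y) :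
  regular_space TX -> regular_space TY ->
  perfect_map TX TY f -> (forall y : Y, exists x : X, f x = y) ->
  very_I_favorable TX -> very_I_favorable TY.
Proof.
  intros [HtX _] _ [Hf [Hcl Hcomp]] Hsurj [C [HC Hgood]].
  exists (fun P => ctbl_sub TY P /\ Closed TX C f P). split.
  - apply CY_club; assumption.
  - intros P [HP1 HP2]. split. exact HP1.
    apply (CY_good HC (fun Q HQ => proj2 (Hgood Q HQ)) Hf Hcomp Hsurj HP1 HP2).
Qed.
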